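(* Let $\mathcal A$ be an abelian category and let $0\to F\xrightarrow{i} M\xrightarrow{d} C\to 0$ be a fully invariant short exact sequence in $\mathcal A$. (1) $M$ is strongly self-$F$-split if and only if $M$ is self-$F$-split and every direct summand of $M$ which contains $F$ is fully invariant. (2) $M$ is dual strongly self-$F$-split if and only if $M$ is dual self-$F$-split and every direct summand of $M$ which is contained in $F$ is fully invariant.
   Context: Let $\mathcal A$ be an abelian category. A morphism $s:X\to Y$ is a section if $ts=1_X$ for some $t:Y\to X$, and a retraction if $st=1_Y$ for some $t$. A monomorphism $i:K\to M$ is fully invariant if for every morphism $h:M\to M$ there is $\alpha:K\to K$ with $hi=i\alpha$; an epimorphism $d:M\to C$ is fully coinvariant if for every $h:M\to M$ there is $\beta:C\to C$ with $dh=\beta d$. A subobject is fully invariant if its inclusion monomorphism is. A short exact sequence $0\to F\xrightarrow{i}N\xrightarrow{d}C\to 0$ is fully invariant if $i$ is fully invariant (equivalently $d$ is fully coinvariant). A (fully invariant) direct summand is a subobject whose inclusion is a (fully invariant) section. For an object $M$ and a fully invariant short exact sequence $0\to F\xrightarrow{i}N\xrightarrow{d}C\to 0$: $N$ is $M$-$F$-split (resp. strongly $M$-$F$-split) if for every morphism $g:M\to N$ the kernel $\ker(dg)$ (equivalently, the morphism $j:P\to M$ in the pullback of $i$ along $g$) is a section (resp. a fully invariant section); $N$ is dual $M$-$F$-split (resp. dual strongly $M$-$F$-split) if for every morphism $g:N\to M$ the cokernel $\mathrm{coker}(gi)$ (equivalently, the morphism $p:M\to Q$ in the pushout of $d$ along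 $g$) is a retraction (resp. a fully coinvariant retraction). $N$ is (dual) (strongly) self-$F$-split if it is (dual) (strongly) $N$-$F$-split. *)

(* Defs.v *)
From HB Require Import structures.
From mathcomp Require Import all_boot all_algebra.
Set Implicit Arguments. Unset Strict Implicit. Unset Printing Implicit Defensive.
Import GRing.Theory.
Local Open Scope ring_scope.

Record PreAdditiveCategory := {
  Obj :> Type;
  Arr : Obj -> Obj -> zmodType;
  comp : forall X Y Z : Obj, Arr Y Z -> Arr X Y -> Arr X Z;
  idm : forall X : Obj, Arr X X;
  comp_assoc : forall X Y Z W (f : Arr Z W) (g : Arr Y Z) (h : Arr X Y),
      comp f (comp g h) = comp (comp f g) h;
  comp_idl : forall X Y (f : Arr X Y), comp (idm Y) f = f;
  comp_idr : forall X Y (f : Arr X Y), comp f (idm X) = f;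
  comp_addl : forall X Y Z (f g : Arr Y Z) (h : Arr X Y),
      comp (f + g) h = comp f h + comp g h;
  comp_addr : forall X Y Z (f : Arr Y Z) (g h : Arr X Y),
      comp f (g + h) = comp f g + comp f h
}.

Arguments comp {_ X Y Z} f g.
Arguments idm {_} X.
Notation "f \o' g" := (comp f g) (at level 40, left associativity).

Section Notions.
Variable C : PreAdditiveCategory.

Definition is_mono {X Y : C} (f : Arr X Y) : Prop :=
  forall W (g h : Arr W X), f \o' g = f \o' h -> g = h.
Definition is_epi {X Y : C} (f : Arr X Y) : Prop :=
  forall W (g h : Arr Y W), g \o' f = h \o' f -> g = h.

Definition is_kernel {X Y K : C} (f : Arr X Y) (k : Arr K X) : Prop :=
  f \o' k = 0 /\
  forall W (g : Arr W X), f \o' g = 0 -> exists! h : Arr W K, k \o' h = g.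
Definition is_cokernel {X Y Q : C} (f : Arr X Y) (c : Arr Y Q) : Prop :=
  c \o' f = 0 /\
  forall W (g : Arr Y W), g \o' f = 0 -> exists! h : Arr Q W, h \o' c = g.

Definition has_zero_object : Prop := exists Z : C, idm Z = 0.
Definition has_biproducts : Prop :=
  forall X Y : C, exists (P : C) (i1 : Arr X P) (i2 : Arr Y P)
                         (p1 : Arr P X) (p2 : Arr P Y),
    [/\ p1 \o' i1 = idm X, p2 \o' i2 = idm Y, p1 \o' i2 = 0, p2 \o' i1 = 0
      & (i1 \o' p1) + (i2 \o' p2) = idm P].
Definition has_kernels : Prop :=
  forall (X Y : C) (f : Arr X Y), exists (K : C) (k : Arr K X), is_kernel f k.
Definition has_cokernels : Prop :=
  forall (X Y : C) (f : Arr X Y), exists (Q : C) (c : Arr Y Q), is_cokernel f c.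
Definition monos_are_kernels : Prop :=
  forall (X Y : C) (f : Arr X Y), is_mono f ->
    exists (Z : C) (g : Arr Y Z), is_kernel g f.
Definition epis_are_cokernels : Prop :=
  forall (X Y : C) (f : Arr X Y), is_epi f ->
    exists (Z : C) (g : Arr Z X), is_cokernel g f.

Definition is_abelian : Prop :=
  has_zero_object /\ has_biproducts /\ has_kernels /\ has_cokernels /\
  monos_are_kernels /\ epis_are_cokernels.

Definition is_section {X Y : C} (s : Arr X Y) : Prop :=
  exists t : Arr Y X, t \o' s = idm X.
Definition is_retraction {X Y : C} (s : Arr X Y) : Prop :=
  exists t : Arr Y X, s \o' t = idm Y.

Definition fully_invariant {K M : C} (i : Arr K M) : Prop :=
  is_mono i /\ forall h : Arr M M, exists a : Arr K K, h \o' i = i \o' a.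
Definition fully_coinvariant {M Q : C} (d : Arr M Q) : Prop :=
  is_epi d /\ forall h : Arr M M, exists b : Arr Q Q, d \o' h = b \o' d.

Definition short_exact {F N Q : C} (i : Arr F N) (d : Arr N Q) : Prop :=
  [/\ is_mono i, is_epi d, is_kernel d i & is_cokernel i d].
Definition fully_invariant_ses {F N Q : C} (i : Arr F N) (d : Arr N Q) : Prop :=
  short_exact i d /\ fully_invariant i.

(* N is M-F-split w.r.t. the sequence (i,d): for every g : M -> N, the
   kernel j : P -> M of d \o g is a section (any choice of kernel). *)
Definition M_F_split (M : C) {F N Q : C} (i : Arr F N) (d : Arr N Q) : Prop :=
  forall g : Arr M N, forall (P : C) (j : Arr P M),
    is_kernel (d \o' g) j -> is_section j.
Definition strongly_M_F_split (M : C) {F N Q : C} (i : Arr F N) (d : Arr N Q)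
  : Prop :=
  forall g : Arr M N, forall (P : C) (j : Arr P M),
    is_kernel (d \o' g) j -> is_section j /\ fully_invariant j.
Definition dual_M_F_split (M : C) {F N Q : C} (i : Arr F N) (d : Arr N Q)
  : Prop :=
  forall g : Arr N M, forall (Q' : C) (p : Arr M Q'),
    is_cokernel (g \o' i) p -> is_retraction p.
Definition dual_strongly_M_F_split (M : C) {F N Q : C} (i : Arr F N)
  (d : Arr N Q) : Prop :=
  forall g : Arr N M, forall (Q' : C) (p : Arr M Q'),
    is_cokernel (g \o' i) p -> is_retraction p /\ fully_coinvariant p.

Definition self_F_split {F N Q : C} (i : Arr F N) (d : Arr N Q) :=
  M_F_split N i d.
Definition strongly_self_F_split {F N Q : C} (i : Arr F N) (d : Arr N Q) :=
  strongly_M_F_split N i d.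
Definition dual_self_F_split {F N Q : C} (i : Arr F N) (d : Arr N Q) :=
  dual_M_F_split N i d.
Definition dual_strongly_self_F_split {F N Q : C} (i : Arr F N) (d : Arr N Q) :=
  dual_strongly_M_F_split N i d.

(* A direct summand of M is a subobject given by a section s : K -> M.
   It contains the subobject i : F -> M if i factors through s, and it is
   contained in F if s factors through i. *)
Definition direct_summand {K M : C} (s : Arr K M) : Prop := is_section s.
Definition sub_contains {K F M : C} (s : Arr K M) (i : Arr F M) : Prop :=
  exists u : Arr F K, s \o' u = i.

End Notions.

(* Main.v *)
Require Import Defs.
From HB Require Import structures.
From mathcomp Require Import all_boot all_algebra.
Set Implicit Arguments. Unset Strict Implicit. Unset Printing Implicit Defensive.
Import GRing.Theory.
Local Open Scope ring_scope.

Section Helpers.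
Variable A : PreAdditiveCategory.

Lemma comp0r (X Y Z : A) (f : Arr Y Z) : f \o' (0 : Arr X Y) = 0.
Proof.
have H := comp_addr f (0 : Arr X Y) 0; rewrite addr0 in H.
by apply: (addIr (f \o' 0)); rewrite add0r -H.
Qed.

Lemma comp0l (X Y Z : A) (f : Arr X Y) : (0 : Arr Y Z) \o' f = 0.
Proof.
have H := comp_addl (0 : Arr Y Z) 0 f; rewrite addr0 in H.
by apply: (addIr (0 \o' f)); rewrite add0r -H.
Qed.

Lemma compNr (X Y Z : A) (f : Arr Y Z) (g : Arr X Y) : f \o' (- g) = - (f \o' g).
Proof.
apply/eqP; rewrite -subr_eq0 opprK -comp_addr addrC subrr; apply/eqP; exact: comp0r.
Qed.

Lemma compNl (X Y Z : A) (f : Arr Y Z) (g : Arr X Y) : (- f) \o' g = - (f \o' g).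
Proof.
apply/eqP; rewrite -subr_eq0 opprK -comp_addl addrC subrr; apply/eqP; exact: comp0l.
Qed.

Lemma compBr (X Y Z : A) (f : Arr Y Z) (g h : Arr X Y) : f \o' (g - h) = f \o' g - f \o' h.
Proof. by rewrite comp_addr compNr. Qed.

Lemma compBl (X Y Z : A) (f g : Arr Y Z) (h : Arr X Y) : (f - g) \o' h = f \o' h - g \o' h.
Proof. by rewrite comp_addl compNl. Qed.

Lemma kernel_mono (X Y K : A) (f : Arr X Y) (k : Arr K X) : is_kernel f k -> is_mono k.
Proof.
move=> [fk0 Hk] W a b Hab.
have H0 : f \o' (k \o' a) = 0 by rewrite comp_assoc fk0 comp0l.
have [h [_ Hu]] := Hk W _ H0.
by rewrite -(Hu a erefl) (Hu b (esym Hab)).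
Qed.

Lemma cokernel_epi (X Y Q : A) (f : Arr X Y) (c : Arr Y Q) : is_cokernel f c -> is_epi c.
Proof.
move=> [cf0 Hc] W a b Hab.
have H0 : (a \o' c) \o' f = 0 by rewrite -comp_assoc cf0 comp0r.
have [h [_ Hu]] := Hc W _ H0.
by rewrite -(Hu a erefl) (Hu b (esym Hab)).
Qed.

Lemma section_mono (X Y : A) (s : Arr X Y) : is_section s -> is_mono s.
Proof.
move=> [t ts] W a b Hab.
by rewrite -(comp_idl a) -(comp_idl b) -ts -!comp_assoc Hab.
Qed.

End Helpers.

Theorem theorem3p5 (A : PreAdditiveCategory) (HA : is_abelian A)
  (F M C : A) (i : Arr F M) (d : Arr M C) :
  fully_invariant_ses i d ->
  (strongly_self_F_split i d <->
     self_F_split i d /\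
     (forall (K : A) (s : Arr K M),
        direct_summand s -> sub_contains s i -> fully_invariant s)) /\
  (dual_strongly_self_F_split i d <->
     dual_self_F_split i d /\
     (forall (K : A) (s : Arr K M),
        direct_summand s -> sub_contains i s -> fully_invariant s)).
Proof.
move=> [[imono depi [di0 Hker] [di0' Hcok]] [_ Hfi]].
have [_ [_ [Hkers [Hcoks _]]]] := HA.
split; split.
- move=> H; split.
    by move=> g P j Hj; case: (H g P j Hj).
  move=> K s [t ts] [u su].
  pose g := idm M - s \o' t.
  have Hk : is_kernel (d \o' g) s.
    split.
      by rewrite -comp_assoc /g compBl comp_idl -comp_assoc ts comp_idr subrr comp0r.
    move=> W w hw.
    rewrite -comp_assoc in hw.
    have [h [ih _]] := Hker W _ hw.
    have tg : t \o' g = 0 by rewrite /g compBr comp_idr comp_assoc ts comp_idl subrr.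
    have uh : u \o' h = 0.
      have : t \o' (i \o' h) = 0 by rewrite ih comp_assoc tg comp0l.
      by rewrite -su -comp_assoc comp_assoc ts comp_idl.
    have gw : g \o' w = 0 by rewrite -ih -su -comp_assoc uh comp0r.
    have wst : s \o' (t \o' w) = w.
      move: gw; rewrite /g compBl comp_idl.
      move=> gw; apply/esym; apply/eqP; rewrite -subr_eq0 comp_assoc; exact/eqP.
    exists (t \o' w); split => // x sx.
    have sm := section_mono (ex_intro _ t ts). apply: (sm W). by rewrite sx wst.
  by case: (H g K s Hk).
- move=> [H1 H2] g P j Hj; split; first exact: H1 g P j Hj.
  apply: H2; first exact: H1 g P j Hj.
  have [a ga] := Hfi g.
  have H0 : (d \o' g) \o' i = 0 by rewrite -comp_assoc ga comp_assoc di0 comp0l.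
  have [h [jh _]] := Hj.2 F i H0.
  by exists h.
- move=> H; split.
    by move=> g Q' p Hp; case: (H g Q' p Hp).
  move=> K s [t ts] [u ius].
  have [Q' [p Hp]] := Hcoks _ _ ((s \o' t) \o' i).
  have [_ [_ Hfc]] := H (s \o' t) Q' p Hp.
  split; first exact: section_mono (ex_intro _ t ts).
  move=> h.
  have ps : p \o' s = 0.
    have -> : s = s \o' t \o' i \o' u by rewrite -!comp_assoc ius ts comp_idr.
    by rewrite comp_assoc (proj1 Hp) comp0l.
  have [b pb] := Hfc h.
  have [q [qp _]] : exists! q : Arr Q' M, q \o' p = idm M - s \o' t.
    apply: (proj2 Hp).
    rewrite compBl comp_idl !comp_assoc -(comp_assoc s t s) ts comp_idr subrr //.
  exists (t \o' h \o' s).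
  apply/eqP; rewrite -subr_eq0; apply/eqP.
  have -> : h \o' s - s \o' (t \o' h \o' s) = (idm M - s \o' t) \o' (h \o' s).
    by rewrite compBl comp_idl !comp_assoc.
  by rewrite -qp -comp_assoc (comp_assoc p h s) pb -comp_assoc ps !comp0r.
- move=> [H1 H2] g Q' p Hp.
  have [t pt] := H1 g Q' p Hp.
  split; first by exists t.
  split; first exact: (cokernel_epi Hp).
  move=> h.
  have [K [k Hk]] := Hkers _ _ p.
  have ksec : is_section k.
    have H0 : p \o' (idm M - t \o' p) = 0
      by rewrite compBr comp_idr comp_assoc pt comp_idl subrr.
    have [r [kr _]] := (proj2 Hk) M _ H0.
    exists r; have km := kernel_mono Hk; apply: (km K).
    rewrite comp_assoc kr compBl comp_idl -comp_assoc (proj1 Hk) comp0r subr0.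
    by rewrite comp_idr.
  have [a ga] := Hfi g.
  have dgi : d \o' (g \o' i) = 0 by rewrite ga comp_assoc di0 comp0l.
  have [q [qp _]] := (proj2 Hp) C d dgi.
  have dk : d \o' k = 0 by rewrite -qp -comp_assoc (proj1 Hk) comp0r.
  have [v [iv _]] := Hker K k dk.
  have [_ Hkfi] := H2 K k ksec (ex_intro _ v iv).
  have [al hk] := Hkfi h.
  have [m [km _]] := (proj2 Hk) F (g \o' i) (proj1 Hp).
  have H0 : (p \o' h) \o' (g \o' i) = 0.
    by rewrite -km -comp_assoc (comp_assoc h k m) hk -comp_assoc comp_assoc (proj1 Hk) comp0l.
  have [be [bp _]] := (proj2 Hp) Q' _ H0.
  by exists be.
Qed.
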